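(* Let $m\ge 2$ be an integer and let $a\in\mathbb{R}\setminus\mathbb{Z}^-$, where $\mathbb{Z}^-=\{k\in\mathbb{Z}: k\le 0\}$. Let $\mathcal{H}_\infty=(\mathcal{H}_{i_1\cdots i_m})$ be the $m$-order infinite dimensional generalized Hilbert tensor with entries $$\mathcal{H}_{i_1 i_2\cdots i_m}=\frac{1}{i_1+i_2+\cdots+i_m-m+a},\qquad i_1,\dots,i_m\in\{1,2,3,\dots\}.$$ Then for every $x=(x_i)_{i=1}^\infty\in l^1$: (i) the series $$\mathcal{H}_\infty x^m=\sum_{i_1,\dots,i_m=1}^\infty \frac{x_{i_1}x_{i_2}\cdots x_{i_m}}{i_1+i_2+\cdots+i_m-m+a}$$ converges absolutely; in particular $|\mathcal{H}_\infty x^m|<\infty$; (ii) for every positive integer $i$, the series $$(\mathcal{H}_\infty x^{m-1})_i=\sum_{i_2,\dots,i_m=1}^\infty \frac{x_{i_2}\cdots x_{i_m}}{i+i_2+\cdots+i_m-m+a}$$ converges absolutely, so that the infinite vector $\mathcal{H}_\infty x^{m-1}$ is well defined.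
   Context: $l^1$ denotes the space of real sequences $x=(x_i)_{i=1}^\infty$ with $\sum_{i=1}^\infty|x_i|<\infty$. Since $a\notin\mathbb{Z}^-$ and $i_1+\cdots+i_m-m$ is a nonnegative integer, all denominators are nonzero. *)

(* Defs.v *)
From HB Require Import structures.
From mathcomp Require Import all_boot all_order all_algebra.
From mathcomp Require Import all_classical all_reals all_analysis.
Set Implicit Arguments. Unset Strict Implicit. Unset Printing Implicit Defensive.
Import Order.TTheory GRing.Theory Num.Theory.
Local Open Scope ring_scope.
Local Open Scope classical_set_scope.

(* Sequences x = (x_i)_{i>=1} are functions nat -> R; the value at 0 is
   irrelevant.  Multi-indices (i_1,...,i_k) are finite functions 'I_k -> nat,
   restricted to positive entries. *)

Definition pos_idx (k : nat) : set {ffun 'I_k -> nat} :=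
  [set i | forall j, (0 < i j)%N].

Definition in_l1 (R : realType) (x : nat -> R) : Prop :=
  summable [set i : nat | (0 < i)%N] (fun i => (x i)%:E).

Definition hilbert_entry (R : realType) (m : nat) (a : R)
    (i : {ffun 'I_m -> nat}) : R :=
  ((\sum_(j < m) (i j)%:R) - m%:R + a)^-1.

Definition Hxm_term (R : realType) (m : nat) (a : R) (x : nat -> R)
    (i : {ffun 'I_m -> nat}) : R :=
  hilbert_entry a i * \prod_(j < m) x (i j).

(* general term of (H x^{m-1})_i, indices (i_2,...,i_m) : 'I_(m-1) -> nat *)
Definition Hxm1_term (R : realType) (m : nat) (a : R) (x : nat -> R)
    (i : nat) (i' : {ffun 'I_m.-1 -> nat}) : R :=
  (i%:R + (\sum_(j < m.-1) (i' j)%:R) - m%:R + a)^-1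
  * \prod_(j < m.-1) x (i' j).

Arguments pos_idx : clear implicits.
Arguments in_l1 {R} x.
Arguments hilbert_entry {R} m a i.
Arguments Hxm_term {R} m a x i.
Arguments Hxm1_term {R} m a x i i'.

(* Main.v *)
Require Import Defs.
From HB Require Import structures.
From mathcomp Require Import all_boot all_order all_algebra.
From mathcomp Require Import all_classical all_reals all_analysis.
From mathcomp Require Import lra ring.
Import Order.TTheory GRing.Theory Num.Theory.
Local Open Scope ring_scope.
Local Open Scope classical_set_scope.

Lemma inv_bound {R : realType} (b : R) :
  exists C : R, 0 <= C /\ forall n : nat, `|(n%:R + b)^-1| <= C.
Proof.
have [K hK] : exists K : nat, `|b| + 1 < K%:R.
  exists (Num.Def.archi_bound (`|b| + 1)); apply: archi_boundP.
  by rewrite addr_ge0.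
exists (1 + \sum_(n < K) `|(n%:R + b)^-1|); split.
  by rewrite addr_ge0 // sumr_ge0.
move=> n; case: (ltnP n K) => hn.
  rewrite (bigD1 (Ordinal hn)) //= addrA ler_wpDr ?sumr_ge0 //.
  by rewrite ler_wpDl.
have h1 : 1 <= n%:R + b.
  have : K%:R <= n%:R :> R by rewrite ler_nat.
  have := ler_norm (- b); rewrite normrN; lra.
rewrite ger0_norm ?invr_ge0; last by lra.
rewrite ler_wpDr ?sumr_ge0 // invr_le1 //; [|lra]; rewrite unitfE; apply/eqP => h0; rewrite h0 in h1; lra.
Qed.
Lemma l1_bound {R : realType} (x : nat -> R) : in_l1 x ->
  exists M : R, 0 <= M /\ forall N, \sum_(n < N) `|x n| <= M.
Proof.
rewrite /in_l1 /summable => hx.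
set E := esum _ _ in hx.
have E0 : (0 <= E)%E by apply: esum_ge0.
have Efin : E \is a fin_num by rewrite fin_numElt hx andbT (lt_le_trans (ltNyr 0)).
exists (`|x 0%N| + fine E); split; first by rewrite addr_ge0 // fine_ge0.
move=> N.
have h1 : \sum_(0 <= i < N.+1 | (0 < i)%N) `|x i| <= fine E.
  rewrite -lee_fin -sumEFin fineK //.
  apply: le_trans (nneseries_lim_ge _ _) _.
    by move=> n _ _; rewrite lee_fin.
  rewrite nneseries_esum //.

apply: le_trans (_ : \sum_(0 <= i < N.+1) `|x i| <= _).
  by rewrite big_mkord [X in _ <= X]big_ord_recr /= lerDl.
rewrite big_nat_recl // lerD2l.
apply: le_trans h1.
rewrite [X in _ <= X]big_mkcond /=.
rewrite [X in _ <= X]big_nat_recl //= add0r.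
by apply: ler_sum => i _.
Qed.
Lemma box_bound (R : realType) (x : nat -> R) (M : R)
  (hxM : forall N, \sum_(n < N) `|x n| <= M) (k : nat)
  (s : seq {ffun 'I_k -> nat}) : uniq s ->
  \sum_(i <- s) \prod_(j < k) `|x (i j)| <= \prod_(j < k) M.
Proof.
move=> us.
pose n := \max_(i <- s) \max_(j < k) i j.
pose psi (i : {ffun 'I_k -> nat}) : {ffun 'I_k -> 'I_n.+1} := [ffun j => inord (i j)].
pose phi (f : {ffun 'I_k -> 'I_n.+1}) : {ffun 'I_k -> nat} := [ffun j => nat_of_ord (f j)].
have hpp : {in s, cancel psi phi}.
  move=> i hi; apply/ffunP => j; rewrite /phi /psi !ffunE inordK // ltnS.
  apply: (leq_trans _ (leq_bigmax_seq (F := fun i : {ffun 'I_k -> nat} => \max_(j < k) i j) (P := predT) _ hi isT)).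
  exact: (leq_bigmax (F := fun j => i j)).
pose G (f : {ffun 'I_k -> nat}) := \prod_(j < k) `|x (f j)|.
have -> : \sum_(i <- s) \prod_(j < k) `|x (i j)| = \sum_(i <- s) G (phi (psi i)).
  by apply: eq_big_seq => i hi; rewrite hpp.
rewrite -(big_map psi predT (fun f => G (phi f))).
apply: le_trans (_ : \sum_(f : {ffun 'I_k -> 'I_n.+1}) G (phi f) <= _).
  rewrite big_uniq; last first.
    rewrite map_inj_in_uniq // => i1 i2 h1 h2 e.
    by rewrite -(hpp i1) // -(hpp i2) // e.
  rewrite [X in _ <= X](bigID (mem (map psi s))) /= lerDl sumr_ge0 // => f _.
  exact: prodr_ge0.
rewrite /G /phi.
under eq_bigr do under eq_bigr do rewrite ffunE.
rewrite -(bigA_distr_bigA (fun (j : 'I_k) (m : 'I_n.+1) => `|x m|)).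
apply: ler_prod => j _; rewrite sumr_ge0 //=.
exact: hxM.
Qed.

Lemma summable_bound (T : choiceType) (R : realType) (D : set T) (f : T -> R) (B : R) :
  (forall s : seq T, uniq s -> \sum_(i <- s) `|f i| <= B) ->
  summable D (fun i => (f i)%:E).
Proof.
move=> H; rewrite /summable; apply: (le_lt_trans (y := B%:E)); last exact: ltry.
apply: ge_ereal_sup => _ [X [finX XD] <-].
rewrite fsbig_finite //=.

rewrite sumEFin lee_fin; apply: H; exact: finmap.fset_uniq.
Qed.

Theorem proposition1p1 (R : realType) (m : nat) (a : R)
  (hm : (2 <= m)%N)
  (ha : forall k : int, k <= 0 -> a != k%:~R)
  (x : nat -> R) (hx : in_l1 x) :
  summable (pos_idx m) (fun i => (Hxm_term m a x i)%:E) /\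
  (forall i : nat, (0 < i)%N ->
     summable (pos_idx m.-1) (fun i' => (Hxm1_term m a x i i')%:E)).
Proof.
have [C [C0 hC]] := inv_bound (a - m%:R : R).
have [M [M0 hM]] := l1_bound x hx.
split.
  apply: (@summable_bound _ _ _ _ (C * \prod_(j < m) M)) => s us.
  apply: le_trans (_ : \sum_(i <- s) C * \prod_(j < m) `|x (i j)| <= _).
    apply: ler_sum => i _.
    rewrite /Hxm_term /hilbert_entry normrM normr_prod ler_wpM2r ?prodr_ge0 //.
    rewrite -natr_sum.
    have -> : forall u : R, u - m%:R + a = u + (a - m%:R) by move=> u; ring.
    exact: hC.
  rewrite -mulr_sumr ler_wpM2l //; exact: box_bound.
move=> i0 _.
apply: (@summable_bound _ _ _ _ (C * \prod_(j < m.-1) M)) => s us.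
apply: le_trans (_ : \sum_(i <- s) C * \prod_(j < m.-1) `|x (i j)| <= _).
  apply: ler_sum => i _.
  rewrite /Hxm1_term normrM normr_prod ler_wpM2r ?prodr_ge0 //.
  rewrite -natr_sum -natrD.
  have -> : forall u : R, u - m%:R + a = u + (a - m%:R) by move=> u; ring.
  exact: hC.
rewrite -mulr_sumr ler_wpM2l //; exact: box_bound.
Qed.
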